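(* Let $n>1$ and let $\Omega_S$ be the set of all real $2\times 2n$ matrices of the form $A=\begin{bmatrix} w & 0\\ 0 & -w\end{bmatrix}$, $w\in\mathbb{R}^n$. Let $L(A)$ be the span of the rows of $A$, $L(\Omega_S)=\bigcup_{A\in\Omega_S}L(A)\subset\mathbb{R}^{2n}$, let $\mathcal{P}_{\Omega_S}$ be the set of all real polynomials in $2n$ variables vanishing identically on $L(\Omega_S)$, and let $\mathcal{N}_S=\bigcap_{p\in\mathcal{P}_{\Omega_S}}\{z\in\mathbb{R}^{2n}:p(z)=0\}$. Then \[ L(\Omega_S)=\overline{L(\Omega_S)}=\mathcal{N}_S, \] where the bar denotes closure in $\mathbb{R}^{2n}$. *)

(* Defs.v *)
From HB Require Import structures.
From mathcomp Require Import all_boot all_order all_algebra.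
From mathcomp Require Import all_classical all_reals all_analysis.
From mathcomp Require mpoly.
Set Implicit Arguments. Unset Strict Implicit. Unset Printing Implicit Defensive.
Import Order.TTheory GRing.Theory Num.Theory.
Import numFieldNormedType.Exports.
Local Open Scope ring_scope.
Local Open Scope classical_set_scope.

Definition OmegaS_mx (R : nzRingType) (n : nat) (w : 'rV[R]_n) : 'M[R]_(1 + 1, n + n) :=
  block_mx w 0 0 (- w).

Definition OmegaS (R : nzRingType) (n : nat) : set 'M[R]_(1 + 1, n + n) :=
  [set A | exists w : 'rV[R]_n, A = OmegaS_mx w].

Definition Lrow (R : fieldType) (m k : nat) (A : 'M[R]_(m, k)) : set 'rV[R]_k :=
  [set z | (z <= A)%MS].

Definition L_OmegaS (R : fieldType) (n : nat) : set 'rV[R]_(n + n) :=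
  \bigcup_(A in @OmegaS R n) Lrow A.

Definition peval (R : comNzRingType) (k : nat) (p : mpoly.mpoly k R) (z : 'rV[R]_k) : R :=
  mpoly.meval (fun i : 'I_k => z ord0 i) p.

Definition P_OmegaS (R : fieldType) (n : nat) : set (mpoly.mpoly (n + n) R) :=
  [set p | forall z, @L_OmegaS R n z -> peval p z = 0].

Definition N_S (R : fieldType) (n : nat) : set 'rV[R]_(n + n) :=
  \bigcap_(p in @P_OmegaS R n) [set z | peval p z = 0].

(* Main.v *)
Require Import Defs.
From HB Require Import structures.
From mathcomp Require Import all_boot all_order all_algebra.
From mathcomp Require Import all_classical all_reals all_analysis.
From mathcomp Require Import ring.
From mathcomp Require mpoly.
Import Order.TTheory GRing.Theory Num.Theory.
Import numFieldNormedType.Exports.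
Local Open Scope ring_scope.
Local Open Scope classical_set_scope.

Local Canonical mpoly.mpoly_mpoly__canonical__Algebra_AddMagma.
Local Canonical mpoly.mpoly_mpoly__canonical__Algebra_AddSemigroup.
Local Canonical mpoly.mpoly_mpoly__canonical__Algebra_AddUMagma.
Local Canonical mpoly.mpoly_mpoly__canonical__Algebra_BaseAddMagma.
Local Canonical mpoly.mpoly_mpoly__canonical__Algebra_BaseAddUMagma.
Local Canonical mpoly.mpoly_mpoly__canonical__Algebra_BaseZmodule.
Local Canonical mpoly.mpoly_mpoly__canonical__Algebra_ChoiceBaseAddMagma.
Local Canonical mpoly.mpoly_mpoly__canonical__Algebra_ChoiceBaseAddUMagma.
Local Canonical mpoly.mpoly_mpoly__canonical__Algebra_Nmodule.
Local Canonical mpoly.mpoly_mpoly__canonical__Algebra_Zmodule.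
Local Canonical mpoly.mpoly_mpoly__canonical__GRing_Algebra.
Local Canonical mpoly.mpoly_mpoly__canonical__GRing_ComAlgebra.
Local Canonical mpoly.mpoly_mpoly__canonical__GRing_ComNzRing.
Local Canonical mpoly.mpoly_mpoly__canonical__GRing_ComNzSemiRing.
Local Canonical mpoly.mpoly_mpoly__canonical__GRing_ComPzRing.
Local Canonical mpoly.mpoly_mpoly__canonical__GRing_ComPzSemiRing.
Local Canonical mpoly.mpoly_mpoly__canonical__GRing_ComSemiAlgebra.
Local Canonical mpoly.mpoly_mpoly__canonical__GRing_ComUnitAlgebra.
Local Canonical mpoly.mpoly_mpoly__canonical__GRing_ComUnitRing.
Local Canonical mpoly.mpoly_mpoly__canonical__GRing_IntegralDomain.
Local Canonical mpoly.mpoly_mpoly__canonical__GRing_LSemiAlgebra.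
Local Canonical mpoly.mpoly_mpoly__canonical__GRing_LSemiModule.
Local Canonical mpoly.mpoly_mpoly__canonical__GRing_Lalgebra.
Local Canonical mpoly.mpoly_mpoly__canonical__GRing_Lmodule.
Local Canonical mpoly.mpoly_mpoly__canonical__GRing_NzRing.
Local Canonical mpoly.mpoly_mpoly__canonical__GRing_NzSemiRing.
Local Canonical mpoly.mpoly_mpoly__canonical__GRing_PzRing.
Local Canonical mpoly.mpoly_mpoly__canonical__GRing_PzSemiRing.
Local Canonical mpoly.mpoly_mpoly__canonical__GRing_SemiAlgebra.
Local Canonical mpoly.mpoly_mpoly__canonical__GRing_UnitAlgebra.
Local Canonical mpoly.mpoly_mpoly__canonical__GRing_UnitRing.

Section S.
Variables (R : realType) (n : nat).

Definition minors (z : 'rV[R]_(n + n)) :=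
  forall i j : 'I_n, z 0 (lshift n i) * z 0 (rshift n j) = z 0 (lshift n j) * z 0 (rshift n i).

Lemma mulOm (D : 'M[R]_(1, 1 + 1)) (w : 'rV[R]_n) :
  D *m OmegaS_mx w = row_mx (lsubmx D *m w) (- (rsubmx D *m w)).
Proof.
rewrite /OmegaS_mx -{1}[D]hsubmxK mul_row_block !mulmx0 addr0 add0r mulmxN.
by [].
Qed.

Lemma mx11 (a : 'M[R]_(1,1)) (w : 'rV[R]_n) i : (a *m w) 0 i = a 0 0 * w 0 i.
Proof. by rewrite !mxE big_ord1. Qed.

Lemma L_minors z : L_OmegaS z <-> minors z.
Proof.
split.
  case=> A [w ->] /submxP [D ->] i j.
  rewrite mulOm !row_mxEl !row_mxEr !mxE !big_ord1.
  ring.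
move=> Hm.
have [u0|] := eqVneq (lsubmx z) 0.
  exists (OmegaS_mx (rsubmx z)); first by exists (rsubmx z).
  apply/submxP; exists (row_mx 0 (const_mx (-1))).
  rewrite mulOm row_mxKl row_mxKr mul0mx -[z in LHS]hsubmxK u0.
  congr row_mx; apply/rowP => k; rewrite !mxE ?big_ord1 ?mxE. ring.
move=> nz.
have /existsP [i ui] : [exists i, lsubmx z 0 i != 0].
  apply: contraNT nz => /existsPn H. apply/eqP. apply/rowP => k.
  by move: (H k); rewrite negbK => /eqP ->; rewrite mxE.
rewrite mxE in ui.
set c := z 0 (rshift n i) / z 0 (lshift n i).
exists (OmegaS_mx (lsubmx z)); first by exists (lsubmx z).
apply/submxP; exists (row_mx (const_mx 1) (const_mx (- c))).
rewrite mulOm row_mxKl row_mxKr -[z in LHS]hsubmxK.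
congr row_mx; apply/rowP => k; rewrite !mxE ?big_ord1 ?mxE.
  ring.
by rewrite mulNr opprK /c mulrAC [X in X / _]mulrC -(Hm i k) mulrAC mulfV // mul1r.
Qed.


Definition mnr (p : 'I_n * 'I_n) (z : 'rV[R]_(n + n)) : R :=
  z 0 (lshift n p.1) * z 0 (rshift n p.2) - z 0 (lshift n p.2) * z 0 (rshift n p.1).

Lemma mnr_cont p : continuous (mnr p).
Proof.
move=> z; rewrite /mnr.
have c := fun a : 'I_(n+n) => @coord_continuous R 1 (n + n) 0 a z.
exact: (cvgB (cvgM (c _) (c _)) (cvgM (c _) (c _))).
Qed.

Lemma L_closed : closed (@L_OmegaS R n).
Proof.
have -> : @L_OmegaS R n = \bigcap_(p in [set: 'I_n * 'I_n]) (mnr p @^-1` [set x | x = 0]).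
  apply/seteqP; split => z.
    move=> /L_minors Hm [i j] _ /=; rewrite /mnr /= Hm; exact: subrr.
  move=> H; apply/L_minors => i j; apply/eqP; rewrite -subr_eq0; apply/eqP.
  exact: (H (i, j)).
apply: closed_bigI => p _.
by apply: (proj1 (continuous_closedP _) (mnr_cont p)); exact: closed_eq.
Qed.

Definition mnrP (p : 'I_n * 'I_n) : mpoly.mpoly (n + n) R :=
  mpoly.mpolyX R (mpoly.mnm1 (lshift n p.1)) * mpoly.mpolyX R (mpoly.mnm1 (rshift n p.2))
  - mpoly.mpolyX R (mpoly.mnm1 (lshift n p.2)) * mpoly.mpolyX R (mpoly.mnm1 (rshift n p.1)).

Lemma peval_mnrP p z : peval (mnrP p) z = mnr p z.
Proof. by rewrite /peval /mnrP mpoly.mevalB !mpoly.mevalM !mpoly.mevalXU. Qed.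

Lemma L_N : @L_OmegaS R n = @N_S R n.
Proof.
apply/seteqP; split => z.
  by move=> Lz p Pp; exact: Pp.
move=> Nz; apply/L_minors => i j; apply/eqP; rewrite -subr_eq0; apply/eqP.
have := Nz (mnrP (i, j)); rewrite /= peval_mnrP; apply.
move=> y /L_minors Hm; rewrite peval_mnrP /mnr /= Hm; exact: subrr.
Qed.

End S.

Theorem theorem4p2 (R : realType) (n : nat) (hn : (1 < n)%N) :
  @L_OmegaS R n = closure (@L_OmegaS R n : set 'rV[R]_(n + n)) /\ closure (@L_OmegaS R n : set 'rV[R]_(n + n)) = @N_S R n.
Proof.
have E := proj1 (closure_id _) (@L_closed R n).
split => //; rewrite -E; exact: L_N.
Qed.
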